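(* Let $k\geq 3$. For every $c>0$ there exists $q_c\in(0,1)$ such that, with probability $1-o(1)$ as $n\to\infty$, a random instance $\Phi$ of 1-in-$k$ SAT on $n$ variables with clause/variable ratio $c$ has no two satisfying assignments $A,B$ with $\mathrm{overlap}(A,B)<q_c$.
   Context: An instance of 1-in-$k$ SAT on variables $x_1,\dots,x_n$ is a conjunction of clauses, each consisting of exactly $k$ literals on $k$ distinct variables; an assignment satisfies it if in every clause exactly one literal is true. The random instance with clause/variable ratio $c$ is taken in the constant probability model: each of the $2^k\binom{n}{k}$ possible clauses is included independently with probability $2^{-k}p$, where $p\binom nk=cn$. The overlap of two assignments $A,B$ is $\mathrm{overlap}(A,B)=|\{i:A(x_i)=B(x_i)\}|/n$. *)

(* Defs.v *)
From mathcomp Require Import all_boot.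
From Stdlib Require Import Reals.

Set Implicit Arguments.
Unset Strict Implicit.
Unset Printing Implicit Defensive.

Definition assignment (n : nat) := {ffun 'I_n -> bool}.

(* A clause of 1-in-k SAT: on exactly k distinct variables i, a literal
   Some b (b = true: literal x_i, b = false: literal ~x_i); None means
   variable i does not occur.  There are exactly 2^k * 'C(n,k) clauses. *)
Definition clause (n k : nat) :=
  {f : {ffun 'I_n -> option bool} | #|[set i | f i != None]| == k}.

(* The literal on variable i of clause C is true under A iff C i = Some (A i). *)
Definition sat_clause (n k : nat) (A : assignment n) (C : clause n k) : bool :=
  #|[set i | sval C i == Some (A i)]| == 1.

Definition instance (n k : nat) := {set clause n k}.

Definition satisfies (n k : nat) (A : assignment n) (Phi : instance n k) : bool :=
  [forall C in Phi, sat_clause A C].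

Definition overlap (n : nat) (A B : assignment n) : R :=
  Rdiv (INR #|[set i | A i == B i]|) (INR n).

(* Constant probability model: p * 'C(n,k) = c * n, each clause included
   independently with probability 2^-k * p. *)
Definition p_of (n k : nat) (c : R) : R := Rdiv (Rmult c (INR n)) (INR 'C(n, k)).
Definition clause_prob (n k : nat) (c : R) : R :=
  Rmult (Rinv (pow 2 k)) (p_of n k c).

Definition prob (n k : nat) (c : R) (E : pred (instance n k)) : R :=
  \big[Rplus/0%R]_(Phi : instance n k)
    (if E Phi then
       \big[Rmult/1%R]_(C : clause n k)
          (if C \in Phi then clause_prob n k c else Rminus 1 (clause_prob n k c))
     else 0%R).

Definition Rltb (x y : R) : bool := if Rlt_dec x y then true else false.

Definition no_far_pair (n k : nat) (q : R) : pred (instance n k) :=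
  fun Phi => ~~ [exists A : assignment n, exists B : assignment n,
                   [&& satisfies A Phi, satisfies B Phi & Rltb (overlap A B) q]].
Arguments prob n k c E : clear implicits.
Arguments no_far_pair n k q : clear implicits.

(* Main.v *)
From HB Require Import structures.
Require Import Defs.
From mathcomp Require Import all_boot.
From Stdlib Require Import Lia.

Lemma ffact_ge m k j : k <= j -> (m - j) ^ k <= m ^_ k.
Proof.
elim: k => [|k IH] hkj; first by rewrite expn0 ffactn0.
rewrite ffactnSr expnS mulnC leq_mul //; first exact: IH (ltnW hkj).
by apply: leq_sub2l; apply: ltnW.
Qed.

Lemma ffact_le m k : m ^_ k <= m ^ k.
Proof.
elim: k => [|k IH]; first by rewrite expn0 ffactn0.
by rewrite ffactnSr expnSr leq_mul // leq_subr.
Qed.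

Lemma binom_ratio n j k : n <= 2 * (n - j - k) -> 'C(n, k) <= 2 ^ k * 'C(n - j, k).
Proof.
move=> h.
rewrite -(leq_pmul2r (fact_gt0 k)) -mulnA !bin_ffact.
apply: leq_trans (ffact_le n k) _.
apply: leq_trans (_ : (2 * (n - j - k)) ^ k <= _).
  by case: k h => [|k] h; rewrite ?expn0 // leq_exp2r.
rewrite expnMn leq_mul2l; apply/orP; right.
exact: (@ffact_ge (n - j) k k (leqnn k)).
Qed.

Lemma binom_big n k : 3 <= k -> 2 * k <= n -> n * n <= 2 ^ k * k`! * 'C(n, k).
Proof.
move=> hk hn.
rewrite -mulnA [k`! * _]mulnC bin_ffact.
apply: leq_trans (_ : (2 * (n - k)) ^ k <= _); last first.
  by rewrite expnMn leq_mul2l ffact_ge ?orbT.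
apply: leq_trans (_ : n ^ k <= _); last first.
  rewrite leq_exp2r; last by apply: leq_trans hk.
  move/leP: hn => hn; apply/leP; rewrite -?multE -?minusE in hn *; lia.

have n0 : 0 < n by apply: leq_trans hn; rewrite muln_gt0 /= (leq_trans _ hk).
by rewrite -[n * n]/(n ^ 2) leq_pexp2l // ltnW.
Qed.

From Stdlib Require Import Reals Lra.
Open Scope R_scope.

Lemma RplusA : associative Rplus. Proof. by move=> *; rewrite Rplus_assoc. Qed.
Lemma RmultA : associative Rmult. Proof. by move=> *; rewrite Rmult_assoc. Qed.
HB.instance Definition _ := Monoid.isComLaw.Build R 0 Rplus RplusA Rplus_comm Rplus_0_l.
HB.instance Definition _ := Monoid.isComLaw.Build R 1 Rmult RmultA Rmult_comm Rmult_1_l.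
HB.instance Definition _ := Monoid.isMulLaw.Build R 0 Rmult Rmult_0_l Rmult_0_r.
HB.instance Definition _ := Monoid.isAddLaw.Build R Rmult Rplus Rmult_plus_distr_r Rmult_plus_distr_l.

Lemma factor_sets (T : finType) (f : T -> bool -> R) :
  \big[Rplus/0]_(A : {set T}) \big[Rmult/1]_(x : T) f x (x \in A) =
  \big[Rmult/1]_(x : T) (f x true + f x false).
Proof.
transitivity (\big[Rmult/1]_(x : T) \big[Rplus/0]_(b : bool) f x b).
  2: by apply: eq_bigr => x _; rewrite big_bool.
rewrite (bigA_distr_bigA (fun x b => f x b)).
rewrite (reindex (fun g : {ffun T -> bool} => [set x | g x])) /=.
  by apply: eq_bigr => g _; apply: eq_bigr => x _; rewrite inE.
exists (fun A : {set T} => [ffun x => x \in A]) => [g _ | A _].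
  by apply/ffunP => x; rewrite ffunE inE.
by apply/setP => x; rewrite inE ffunE.
Qed.


Section Gen.
Variables (T : finType) (p : R).
Definition wt (Phi : {set T}) := \big[Rmult/1]_(C : T) (if C \in Phi then p else 1 - p).

Lemma sum_le (I : finType) (P : pred I) (F G : I -> R) :
  (forall i, P i -> F i <= G i) ->
  \big[Rplus/0]_(i | P i) F i <= \big[Rplus/0]_(i | P i) G i.
Proof.
move=> H; apply: (big_ind2 (fun x y => x <= y)) => //; first lra.
by move=> *; apply: Rplus_le_compat.
Qed.

Lemma sum_ge0 (I : finType) (P : pred I) (F : I -> R) :
  (forall i, P i -> 0 <= F i) -> 0 <= \big[Rplus/0]_(i | P i) F i.
Proof.
move=> H; apply: (big_ind (fun x => 0 <= x)) => //; first lra.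
by move=> *; apply: Rplus_le_le_0_compat.
Qed.

Lemma prod_ge0 (I : finType) (P : pred I) (F : I -> R) :
  (forall i, P i -> 0 <= F i) -> 0 <= \big[Rmult/1]_(i | P i) F i.
Proof.
move=> H; apply: (big_ind (fun x => 0 <= x)) => //; first lra.
by move=> *; apply: Rmult_le_pos.
Qed.

Lemma sum_ge_term (I : finType) (F : I -> R) (j : I) :
  (forall i, 0 <= F i) -> F j <= \big[Rplus/0]_(i : I) F i.
Proof.
move=> H; rewrite (@bigD1 R Rplus 0 I j xpredT F) //=.
have := @sum_ge0 I (fun i => i != j) F (fun i _ => H i); lra.
Qed.

Lemma wt_ge0 Phi : 0 <= p <= 1 -> 0 <= wt Phi.
Proof. move=> hp; apply: prod_ge0 => C _; case: ifP => _; lra. Qed.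

Lemma wt_total : \big[Rplus/0]_(Phi : {set T}) wt Phi = 1.
Proof.
rewrite /wt (@factor_sets T (fun C b => if b then p else 1 - p)).
by apply: big1 => C _; lra.
Qed.

Lemma prob_compl (E : pred {set T}) :
  \big[Rplus/0]_(Phi : {set T}) (if E Phi then wt Phi else 0) =
  1 - \big[Rplus/0]_(Phi : {set T}) (if E Phi then 0 else wt Phi).
Proof.
rewrite -wt_total.
have -> : \big[Rplus/0]_(Phi : {set T}) wt Phi =
   \big[Rplus/0]_(Phi : {set T}) ((if E Phi then wt Phi else 0) + (if E Phi then 0 else wt Phi)).
  by apply: eq_bigr => Phi _; case: (E Phi); lra.
rewrite big_split /=; lra.
Qed.

Lemma prod_const_pow (P : pred T) (a : R) :
  \big[Rmult/1]_(C : T) (if P C then a else 1) = a ^ #|P|.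
Proof.
rewrite -big_mkcond big_const /=.
elim: #|_| => //= m IH; by rewrite IH.
Qed.

Lemma avoid_prob (P : pred T) :
  \big[Rplus/0]_(Phi : {set T}) (if [forall C in Phi, ~~ P C] then wt Phi else 0)
  = (1 - p) ^ #|P|.
Proof.
pose g := fun C b => if b then (if P C then 0 else p) else 1 - p.
transitivity (\big[Rplus/0]_(Phi : {set T}) \big[Rmult/1]_(C : T) g C (C \in Phi)).
  apply: eq_bigr => Phi _; case: forall_inP => H.
    apply: eq_bigr => C _; rewrite /g; case: ifP => // /H /negbTE -> //.
  case: (boolP [exists C, (C \in Phi) && P C]) => [/existsP [C /andP [CP PC]] | /existsPn Hn]; last first.
    by exfalso; apply: H => C CP; have := Hn C; rewrite CP.
  by rewrite (bigD1 C) //= /g CP PC Rmult_0_l.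
rewrite factor_sets -prod_const_pow; apply: eq_bigr => C _; rewrite /g.
case: (P C); lra.
Qed.
End Gen.


Definition avoid (n k : nat) (T : {set 'I_n}) (C : clause n k) : bool :=
  [forall i, (sval C i != None) ==> (i \notin T)].

Arguments avoid {n k} T C.

Lemma key (n k : nat) (A B : assignment n) (C : clause n k) :
  (2 < k)%nat -> sat_clause A C -> sat_clause B C ->
  avoid [set i | A i == B i] C -> False.
Proof.
move=> hk sA sB hav.
set S := [set i | sval C i != None].
have hS : #|S| = k by apply/eqP; exact: (svalP C).
set SA := [set i | sval C i == Some (A i)].
have hSB : [set i | sval C i == Some (B i)] = S :\: SA.
  apply/setP => i; rewrite !inE.
  have := forallP hav i; rewrite inE.
  case: (sval C i) => [b|] //= /implyP H.
  have hAB : (A i == B i) = false by apply/negbTE/negP => /H.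
  by case: (A i) (B i) b hAB => [] [] [].
have hsub : SA \subset S.
  by apply/subsetP => i; rewrite !inE => /eqP ->.
move: sB; rewrite /sat_clause hSB cardsD (setIidPr hsub) hS.
move: sA; rewrite /sat_clause -/SA => /eqP ->.
move=> /eqP h; move/ltP: hk => hk; move: h; rewrite -?minusE; lia.
Qed.

Lemma bad_event (n k : nat) (q : R) (Phi : instance n k) :
  (2 < k)%nat -> (0 < n)%nat -> ~~ no_far_pair n k q Phi ->
  exists T : {set 'I_n}, INR #|T| < q * INR n /\
    [forall C in Phi, ~~ avoid T C].
Proof.
move=> hk hn; rewrite /no_far_pair negbK => /existsP [A /existsP [B /and3P [sA sB hq]]].
exists [set i | A i == B i]; split.
  move: hq; rewrite /Rltb /overlap; case: Rlt_dec => // h _.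
  have hn' : 0 < INR n by apply: lt_0_INR; apply/ltP.
  apply: (Rmult_lt_reg_r (/ INR n)); first by apply: Rinv_0_lt_compat.
  rewrite Rmult_assoc Rinv_r ?Rmult_1_r //; lra.
apply/forall_inP => C CP; apply/negP => hav.
apply: (@key n k A B C hk _ _ hav).
  exact: (forall_inP sA C CP).
exact: (forall_inP sB C CP).
Qed.

Lemma card_avoid (n k : nat) (T : {set 'I_n}) :
  ('C(n - #|T|, k) <= #|[pred C : clause n k | avoid T C]|)%nat.
Proof.
pose D := [set U : {set 'I_n} | U \subset ~: T & #|U| == k].
have hD : #|D| = 'C(n - #|T|, k).
  by rewrite cards_draws; congr 'C(_, _); rewrite cardsCs setCK card_ord.
pose mk (U : {set 'I_n}) : {ffun 'I_n -> option bool} :=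
  [ffun i => if i \in U then Some true else None].
have inj : {in D &, injective mk}.
  move=> U V _ _ h; apply/setP => i.
  have := congr1 (fun f : {ffun 'I_n -> option bool} => f i) h; rewrite /mk !ffunE.
  by case: (i \in U); case: (i \in V).
rewrite -hD -(card_in_imset inj).
rewrite -(card_imset [pred C : clause n k | avoid T C] val_inj).
apply: subset_leq_card; apply/subsetP => f /imsetP [U UD ->].
move: UD; rewrite inE => /andP [UT /eqP Uk].
have hk : #|[set i | mk U i != None]| == k.
  apply/eqP; rewrite -Uk; apply: eq_card => i.
  by rewrite !inE /mk ffunE; case: (i \in U).
apply/imsetP; exists (exist _ (mk U) hk) => //.
rewrite inE /avoid; apply/forallP => i /=; apply/implyP.
rewrite /mk ffunE; case: ifP => // iU _.
by have := subsetP UT i iU; rewrite inE.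
Qed.


Lemma exp_pow_INR a m : exp a ^ m = exp (INR m * a).
Proof.
elim: m => [|m IH]; first by rewrite /= Rmult_0_l exp_0.
rewrite [exp a ^ m.+1]/= IH -exp_plus; congr exp; rewrite S_INR; ring.
Qed.

Lemma pow_as_exp x m : 0 < x -> x ^ m = exp (INR m * ln x).
Proof. by move=> hx; rewrite -ln_pow // exp_ln //; apply: pow_lt. Qed.

Lemma ln_ge x : 0 < x -> 1 - / x <= ln x.
Proof.
move=> hx.
have h := exp_ineq1_le (ln (/ x)).
rewrite exp_ln in h; last by apply: Rinv_0_lt_compat.
rewrite ln_Rinv // in h; lra.
Qed.

Lemma prod_const (I : finType) (a : R) :
  \big[Rmult/1]_(i : I) a = a ^ #|I|.
Proof. rewrite big_const /=; elim: #|_| => //= m IH; by rewrite IH. Qed.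

Lemma sum_xpow n (x : R) :
  \big[Rplus/0]_(T : {set 'I_n}) x ^ #|T| = (x + 1) ^ n.
Proof.
have := @factor_sets ('I_n) (fun i b => if b then x else 1).
rewrite prod_const card_ord => <-.
apply: eq_bigr => T _; rewrite (@prod_const_pow ('I_n) (fun i => i \in T) x).
by congr (_ ^ _); apply: eq_card.
Qed.

Lemma exp_mono a b : a <= b -> exp a <= exp b.
Proof.
case/Rle_lt_or_eq_dec => h; first by apply: Rlt_le; apply: exp_increasing.
by rewrite h; apply: Rle_refl.
Qed.

Lemma INR_expn2 m : INR (expn 2 m) = 2 ^ m.
Proof.
elim: m => [|m IH]; first by rewrite expn0.
by rewrite expnS mult_INR IH /=.
Qed.


Lemma bad_bound (n k : nat) (c q x g : R) :
  (2 < k)%nat -> (0 < n)%nat -> 0 <= clause_prob n k c <= 1 -> 0 < x ->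
  (forall T : {set 'I_n}, INR #|T| < q * INR n ->
     g * INR n <= clause_prob n k c * INR 'C(n - #|T|, k)) ->
  \big[Rplus/0]_(Phi : instance n k)
     (if no_far_pair n k q Phi then 0 else @wt _ (clause_prob n k c) Phi)
  <= (x + 1) ^ n * exp (q * INR n * / x - g * INR n).
Proof.
move=> hk hn hp hx hg.
set p := clause_prob n k c.
pose cond (T : {set 'I_n}) := Rltb (INR #|T|) (q * INR n).
pose G (T : {set 'I_n}) (Phi : instance n k) :=
  if [forall C in Phi, ~~ avoid T C] then @wt _ p Phi else 0.
have G0 T Phi : 0 <= G T Phi.
  by rewrite /G; case: ifP => _; [apply: wt_ge0 | lra].
have cG0 T Phi : 0 <= if cond T then G T Phi else 0.
  by case: ifP => _; [apply: G0 | lra].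
apply: Rle_trans (_ : \big[Rplus/0]_(Phi : instance n k)
   \big[Rplus/0]_(T : {set 'I_n}) (if cond T then G T Phi else 0) <= _).
  apply: sum_le => Phi _.
  case: ifP => hE.
    by apply: sum_ge0 => T _; apply: cG0.
  have [T [hT hav]] := @bad_event n k q Phi hk hn (negbT hE).
  apply: (Rle_trans _ _ _ _ (@sum_ge_term _ (fun T => if cond T then G T Phi else 0) T (fun T' => cG0 T' Phi))).
  have hc : cond T = true by rewrite /cond /Rltb; destruct (Rlt_dec (INR #|T|) (q * INR n)) as [h0|h] => //; case: (h hT).
  by rewrite /= hc /G hav; apply: Rle_refl.
rewrite (@exchange_big R 0 Rplus).
apply: Rle_trans (_ : \big[Rplus/0]_(T : {set 'I_n}) (x ^ #|T| * exp (q * INR n * / x - g * INR n)) <= _); last first.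
  by rewrite -big_distrl /= sum_xpow; lra.
apply: sum_le => T _.
rewrite /cond /Rltb; case: Rlt_dec => hT; last first.
  rewrite big1 // ; apply: Rmult_le_pos; [apply: pow_le|apply: Rlt_le; apply: exp_pos]; lra.
rewrite (@avoid_prob _ p (@avoid n k T)).
have hM := @card_avoid n k T.
have hC := hg T hT.
set M := #|avoid T| in hM *.
have [hp0 hp1] : 0 <= p <= 1 by exact: hp.
apply: Rle_trans (_ : exp (- p) ^ M <= _).
  apply: pow_incr; have := exp_ineq1_le (- p); lra.
rewrite exp_pow_INR.
apply: Rle_trans (_ : exp (- (g * INR n)) <= _).
  apply: exp_mono.
  have hMC : INR 'C(n - #|T|, k) <= INR M by apply: le_INR; apply/leP.
  have : p * INR 'C(n - #|T|, k) <= p * INR M by apply: Rmult_le_compat_l.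
  rewrite -/p in hC; lra.
rewrite pow_as_exp // -exp_plus; apply: exp_mono.
have hl := @ln_ge x hx.
have hj := pos_INR #|T|.
have hxi : 0 < / x by apply: Rinv_0_lt_compat.
have h1 : INR #|T| * (1 - / x) <= INR #|T| * ln x by apply: Rmult_le_compat_l.
have h2 : INR #|T| * / x <= q * INR n * / x by apply: Rmult_le_compat_r; lra.
nra.
Qed.


Theorem theorem3 (k : nat) (hk : (leq 3 k)) (c : R) (hc : 0 < c) :
  exists qc : R, 0 < qc < 1 /\
    forall eps : R, 0 < eps ->
      exists N : nat, forall n : nat, (leq N n) ->
        1 - eps <= prob n k c (no_far_pair n k qc).
Proof.
have h2k : 0 < 2 ^ k by apply: pow_lt; lra.
set g := c / (2 ^ k * 2 ^ k).
have hg : 0 < g by rewrite /g; apply: Rdiv_lt_0_compat => //; nra.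
set x := g / 4.
have hx : 0 < x by rewrite /x; lra.
exists (Rmin (1/4) (x * g / 4)).
set q := Rmin (1/4) (x * g / 4).
have hq1 : q <= 1/4 by apply: Rmin_l.
have hq2 : q <= x * g / 4 by apply: Rmin_r.
have hq0 : 0 < q by apply: Rmin_pos; nra.
split; first lra.
move=> eps heps.
have [N0 hN0] := INR_unbounded (Rmax (INR (4 * k)) (Rmax (c * INR k`!) (2 / (g * eps)))).
exists N0 => n hn.
have hnN : INR N0 <= INR n by apply: le_INR; apply/leP.
have hm1 := Rmax_l (INR (4 * k)) (Rmax (c * INR k`!) (2 / (g * eps))).
have hm2 := Rmax_r (INR (4 * k)) (Rmax (c * INR k`!) (2 / (g * eps))).
have hm3 := Rmax_l (c * INR k`!) (2 / (g * eps)).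
have hm4 := Rmax_r (c * INR k`!) (2 / (g * eps)).
have hn4k : (4 * k < n)%nat by apply/ltP; apply: INR_lt; lra.
have hn1 : c * INR k`! < INR n by lra.
have hn2 : 2 / (g * eps) < INR n by lra.
have hn0 : (0 < n)%nat by apply: leq_ltn_trans hn4k.
have hkn : (k <= n)%nat.
  by apply: leq_trans (ltnW hn4k); rewrite leq_pmull.
have hC : (0 < 'C(n, k))%nat by rewrite bin_gt0.
have hCR : 0 < INR 'C(n, k) by apply: lt_0_INR; apply/ltP.
have hnR : 0 < INR n by apply: lt_0_INR; apply/ltP.
set p := clause_prob n k c.
have hpdef : p = c * INR n / (2 ^ k * INR 'C(n, k)).
  by rewrite /p /clause_prob /p_of; field; lra.
have hp0 : 0 <= p.
  rewrite hpdef; apply: Rlt_le; apply: Rdiv_lt_0_compat; nra.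
have hp1 : p <= 1.
  have h2kn : (2 * k <= n)%nat.
    by apply: leq_trans (ltnW hn4k); rewrite leq_mul2r orbT.
  have /leP hb := @binom_big n k hk h2kn.
  have hbR := le_INR _ _ hb.
  rewrite !mult_INR INR_expn2 in hbR.
  have hf : 0 < INR k`! by apply: lt_0_INR; apply/ltP; apply: fact_gt0.
  have h3 : c * INR n * INR k`! <= 2 ^ k * INR 'C(n, k) * INR k`! by nra.
  have h4 : c * INR n <= 2 ^ k * INR 'C(n, k).
    by apply: (Rmult_le_reg_r (INR k`!)).
  rewrite hpdef; apply: (Rmult_le_reg_r (2 ^ k * INR 'C(n, k))); first nra.
  rewrite /Rdiv Rmult_assoc Rinv_l; nra.
have hgb : forall T : {set 'I_n}, INR #|T| < q * INR n ->
     g * INR n <= p * INR 'C(n - #|T|, k).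
  move=> T hT.
  have hq4 : q * INR n <= 1/4 * INR n by apply: Rmult_le_compat_r; lra.
  have hJ : 4 * INR #|T| < INR n.
    by move: hT; set J := INR #|T|; lra.
  have hj : (4 * #|T| < n)%nat.
    apply/ltP; apply: INR_lt; rewrite mult_INR /=.
    by move: hJ; set J := INR #|T|; lra.
  have hnj : (n <= 2 * (n - #|T| - k))%nat.
    move/ltP: hj => hj; move/ltP: hn4k => hn4k'; apply/leP.
    rewrite -?multE -?minusE in hj hn4k' *; lia.
  have /leP hr := @binom_ratio n #|T| k hnj.
  have hrR := le_INR _ _ hr.
  rewrite mult_INR INR_expn2 in hrR.
  set Cm := INR 'C(n - #|T|, k) in hrR *.
  set Cn := INR 'C(n, k) in hrR hCR hpdef *.
  have hE : p * Cm - g * INR n = (c * INR n) * (2 ^ k * Cm - Cn) / (2 ^ k * 2 ^ k * Cn).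
    by rewrite hpdef /g; field; lra.
  suff : 0 <= p * Cm - g * INR n by lra.
  rewrite hE; apply: Rmult_le_pos.
    apply: Rmult_le_pos; nra.
  apply: Rlt_le; apply: Rinv_0_lt_compat; repeat apply: Rmult_lt_0_compat => //.
have hbad := @bad_bound n k c q x g hk hn0 (conj hp0 hp1) hx hgb.
have -> : prob n k c (no_far_pair n k q) = \big[Rplus/0]_(Phi : instance n k)
   (if no_far_pair n k q Phi then @wt _ p Phi else 0) by [].
rewrite prob_compl.
apply: Rplus_le_compat_l; apply: Ropp_le_contravar.
apply: Rle_trans hbad _.
have he1 : (x + 1) ^ n <= exp (INR n * x).
  rewrite -exp_pow_INR; apply: pow_incr; have := exp_ineq1_le x; lra.
have hepos := exp_pos (q * INR n * / x - g * INR n).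
apply: Rle_trans (_ : exp (INR n * x) * exp (q * INR n * / x - g * INR n) <= _).
  by apply: Rmult_le_compat_r; lra.
rewrite -exp_plus.
have hxi : 0 < / x by apply: Rinv_0_lt_compat.
have hqx : q * / x <= g / 4.
  apply: Rle_trans (_ : x * g / 4 * / x <= _); first by apply: Rmult_le_compat_r; lra.
  right; field; lra.
have hqn : q * INR n * / x <= g / 4 * INR n.
  have -> : q * INR n * / x = (q * / x) * INR n by ring.
  by apply: Rmult_le_compat_r; lra.
apply: Rle_trans (_ : exp (- (g * INR n / 2)) <= _).
  apply: exp_mono.
  have h1 : INR n * x = g * INR n / 4 by rewrite /x; field.
  have h2 : g / 4 * INR n = g * INR n / 4 by field.
  lra.
set a := g * INR n / 2.
have ha : 1 < eps * a.
  have h := Rmult_lt_compat_l (g * eps) _ _ (Rmult_lt_0_compat _ _ hg heps) hn2.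
  rewrite /Rdiv -Rmult_assoc Rinv_r_simpl_m in h; last by nra.
  rewrite /a; nra.
rewrite exp_Ropp.
have hea := exp_ineq1_le a.
have hexp := exp_pos a.
apply: (Rmult_le_reg_r (exp a)) => //.
rewrite Rinv_l; nra.
Qed.
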